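(* The limit $\lim_{n\to\infty}\sqrt[n]{c_n}$ exists and equals $\limsup_{n\to\infty}\sqrt[n]{c_n}$.
   Context: A permutation (one-line notation) contains $321$ if there are $i<j<k$ with $\pi_i>\pi_j>\pi_k$. $\mathcal C_n$ is the set of cyclic permutations of $[n]$ (a single $n$-cycle), and $c_n=|\mathcal C_n(321)|$ is the number of cyclic permutations of $[n]$ avoiding $321$. *)

(* Defs.v *)
From HB Require Import structures.
From mathcomp Require Import all_boot all_order all_algebra all_fingroup.
From mathcomp Require Import all_classical all_reals all_analysis.
Set Implicit Arguments. Unset Strict Implicit. Unset Printing Implicit Defensive.

(* Permutations of [n] are 's : 'S_n' acting on {0,...,n-1}; one-line notation
   pi_i = s i (values compared as naturals). *)

Definition contains321 n (s : 'S_n) : bool :=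
  [exists i : 'I_n, exists j : 'I_n, exists k : 'I_n,
     [&& (i < j)%N, (j < k)%N, (s j < s i)%N & (s k < s j)%N]].

Definition cyclic_perm n (s : 'S_n) : bool := #|porbits s| == 1%N.

Definition c_n (n : nat) : nat :=
  #|[set s : 'S_n | cyclic_perm s & ~~ contains321 s]|.

(* Main.v *)
Require Import Defs.
From HB Require Import structures.
From mathcomp Require Import all_boot all_order all_algebra all_fingroup.
From mathcomp Require Import all_classical all_reals all_analysis.
From mathcomp Require Import zify ring lra.
Import Order.TTheory GRing.Theory Num.Theory.
Import numFieldNormedType.Exports.

Set Implicit Arguments. Unset Strict Implicit. Unset Printing Implicit Defensive.

Section Orb.
Variable T : finType.
Implicit Types s : {perm T}.

Lemma porbit_closed s (B : {set T}) x :
  (forall y, y \in B -> s y \in B) -> x \in B -> forall y, y \in porbit s x -> y \in B.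
Proof.
move=> cl xB y /porbitP [i ->]; elim: i => [|i IH]; first by rewrite expg0 perm1.
by rewrite expgSr permM; apply: cl.
Qed.

Lemma cyclic_all s x y : #|porbits s| == 1%N -> y \in porbit s x.
Proof.
move=> /cards1P [Ob hO].
have hx : porbit s x \in porbits s by apply: imset_f.
have hy : porbit s y \in porbits s by apply: imset_f.
rewrite hO !inE in hx hy. by rewrite (eqP hx) -(eqP hy) porbit_id.
Qed.

Lemma all_cyclic s x : (forall y, y \in porbit s x) -> #|porbits s| == 1%N.
Proof.
move=> h; apply/cards1P; exists (porbit s x); apply/setP => Ob; rewrite inE.
apply/imsetP/eqP => [[y _ ->]|->]; last by exists x.
by apply/eqP; rewrite eq_porbit_mem.
Qed.

Lemma porbit_step s x y : y \in porbit s x -> s y \in porbit s x.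
Proof. by case/porbitP => i ->; rewrite -permM -expgSr mem_porbit. Qed.
End Orb.

Section Merge.
Variables (a b : nat).
Local Notation N := (a.+1 + b.+1).

Definition dsum_fun (s : 'S_a.+1) (t : 'S_b.+1) (i : 'I_N) : 'I_N :=
  match fintype.split i with inl j => lshift b.+1 (s j) | inr k => rshift a.+1 (t k) end.

Lemma dsum_inj s t : injective (dsum_fun s t).
Proof.
move=> i1 i2; rewrite /dsum_fun.
case: split_ordP => j1 ->; case: split_ordP => j2 -> /eqP; rewrite ?eq_shift //
  => /eqP/perm_inj -> //.
Qed.

Definition dsum s t : 'S_N := perm (@dsum_inj s t).
Definition pa : 'I_N := lshift b.+1 ord_max.
Definition pm : 'I_N := rshift a.+1 ord0.
Definition mperm s t : 'S_N := tperm pa pm * dsum s t.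

Lemma dsumL s t j : dsum s t (lshift _ j) = lshift _ (s j).
Proof. by rewrite permE /dsum_fun (unsplitK (inl _ j)). Qed.
Lemma dsumR s t k : dsum s t (rshift _ k) = rshift _ (t k).
Proof. by rewrite permE /dsum_fun (unsplitK (inr _ k)). Qed.

Lemma mpermL s t j : j != ord_max -> mperm s t (lshift _ j) = lshift _ (s j).
Proof.
move=> hj; rewrite permM tpermD ?dsumL // /pa /pm ?eq_shift // eq_sym //.
Qed.
Lemma mpermR s t k : k != ord0 -> mperm s t (rshift _ k) = rshift _ (t k).
Proof.
move=> hk; rewrite permM tpermD ?dsumR // /pa /pm ?eq_shift // eq_sym //.
Qed.
Lemma mperm_pa s t : mperm s t pa = rshift _ (t ord0).
Proof. by rewrite permM tpermL dsumR. Qed.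
Lemma mperm_pm s t : mperm s t pm = lshift _ (s ord_max).
Proof. by rewrite permM tpermR dsumL. Qed.

Lemma mperm_cyclic s t : cyclic_perm s -> cyclic_perm t -> cyclic_perm (mperm s t).
Proof.
move=> cs ct; apply: (@all_cyclic _ _ pm) => y.
set Ob := porbit (mperm s t) pm.
have O0 : pm \in Ob by apply: porbit_id.
have HL : forall j, lshift b.+1 j \in Ob.
  set B := [set j | lshift b.+1 j \in Ob].
  have Bcl : forall j, j \in B -> s j \in B.
    move=> j; rewrite !inE => hj; case: (eqVneq j ord_max) => [->|nj].
      by rewrite -(mperm_pm s t) porbit_step.
    by rewrite -(mpermL s t nj) porbit_step.
  have B0 : s ord_max \in B by rewrite inE -(mperm_pm s t) porbit_step.
  move=> j; have := porbit_closed Bcl B0 (cyclic_all (s ord_max) j cs).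
  by rewrite inE.
have HR : forall k, rshift a.+1 k \in Ob.
  set B := [set k | rshift a.+1 k \in Ob].
  have Bcl : forall k, k \in B -> t k \in B.
    move=> k; rewrite !inE => hk; case: (eqVneq k ord0) => [->|nk].
      by rewrite -(mperm_pa s t) porbit_step // HL.
    by rewrite -(mpermR s t nk) porbit_step.
  have B0 : ord0 \in B by rewrite inE.
  move=> k; have := porbit_closed Bcl B0 (cyclic_all ord0 k ct).
  by rewrite inE.
by case: (split_ordP y) => [j ->|k ->].
Qed.

Lemma mperm_inj s t s' t' : mperm s t = mperm s' t' -> s = s' /\ t = t'.
Proof.
move/mulgI => hd; split; apply/permP => j.
  by apply: (@lshift_inj _ b.+1); rewrite -(dsumL s t) -(dsumL s' t') hd.
by apply: (@rshift_inj a.+1); rewrite -(dsumR s t) -(dsumR s' t') hd.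
Qed.
End Merge.
Section M2.
Variables (a b : nat).
Local Notation N := (a.+1 + b.+1).

Lemma inord_eq n (i : 'I_n.+1) v : (i : nat) = v -> inord v = i.
Proof. by move=> <-; rewrite inord_val. Qed.

Lemma mperm_val (s : 'S_a.+1) (t : 'S_b.+1) (x : 'I_N) :
  nat_of_ord (mperm s t x) = if (x < a) || (x == a.+1 :> nat)
                      then nat_of_ord (s (inord (minn x a)))
                      else a.+1 + nat_of_ord (t (inord (x - a.+1))).
Proof.
case: (split_ordP x) => [j ->|k ->].
- case: (eqVneq j ord_max) => [->|nj].
    rewrite -/(pa a b) mperm_pa /=.
    have -> : (a < a) || (a == a.+1) = false by lia.
    by rewrite (@inord_eq _ ord0) //=; lia.
  have hj : (j < a)%N.
    have := ltn_ord j; move: nj; rewrite -val_eqE /=; lia.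
  rewrite mpermL //= hj /=.
  by rewrite (@inord_eq _ j) //; lia.
- case: (eqVneq k ord0) => [->|nk].
    rewrite -/(pm a b) mperm_pm /=.
    have -> : (a.+1 + 0 < a) || (a.+1 + 0 == a.+1) = true by lia.
    by rewrite (@inord_eq _ ord_max) //=; lia.
  have hk : (0 < k)%N by move: nk; rewrite -val_eqE /=; lia.
  rewrite mpermR //=.
  have -> : (a.+1 + k < a) || (a.+1 + k == a.+1) = false by lia.
  by rewrite (@inord_eq _ k) //; lia.
Qed.

Lemma mperm_avoid (s : 'S_a.+1) (t : 'S_b.+1) : ~~ contains321 s -> ~~ contains321 t -> ~~ contains321 (mperm s t).
Proof.
move=> hs ht; apply/negP => /existsP [i /existsP [j /existsP [k /and4P [hij hjk h1 h2]]]].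
rewrite !mperm_val in h1 h2.
have bi := ltn_ord (s (inord (minn i a))).
have bj := ltn_ord (s (inord (minn j a))).
have bk := ltn_ord (s (inord (minn k a))).
move: h1 h2; case: ifP => c1; case: ifP => c2; case: ifP => c3 => h1 h2; try lia.
- apply: (negP hs); apply/existsP; exists (inord (minn i a)).
  apply/existsP; exists (inord (minn j a)); apply/existsP; exists (inord (minn k a)).
  rewrite !inordK; try lia.  
- apply: (negP ht); apply/existsP; exists (inord (i - a.+1)).
  apply/existsP; exists (inord (j - a.+1)); apply/existsP; exists (inord (k - a.+1)).
  have := ltn_ord i; have := ltn_ord j; have := ltn_ord k => ??? .
  by rewrite !inordK; try lia.
Qed.
End M2.
Section Bound.
Variable n : nat.
Implicit Types (s r : 'S_n) (A : {set 'I_n}).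

Definition strict_on A (f : 'I_n -> 'I_n) :=
  forall x y, x \in A -> y \in A -> (x < y)%N -> (f x < f y)%N.

Lemma strict_cnt A f x : strict_on A f -> x \in A ->
  #|[set z in f @: A | (z < f x)%N]| = #|[set y in A | (y < x)%N]|.
Proof.
move=> hf xA.
have finj : {in A &, injective f}.
  move=> u v uA vA huv; apply/ord_inj/eqP; case: (ltngtP u v) => // h.
    by have := hf _ _ uA vA h; rewrite huv ltnn.
  by have := hf _ _ vA uA h; rewrite huv ltnn.
have -> : [set z in f @: A | (z < f x)%N] = f @: [set y in A | (y < x)%N].
  apply/setP => z; rewrite inE; apply/andP/imsetP.
    case=> /imsetP [y yA ->] hy; exists y => //; rewrite inE yA /=.
    case: (ltngtP y x) => // h.
      by have := hf _ _ xA yA h; lia.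
    by move: hy; rewrite (ord_inj h) ltnn.
  case=> y; rewrite inE => /andP [yA hy] ->; split; first by apply: imset_f.
  exact: hf.
rewrite card_in_imset //; move=> u v; rewrite !inE => /andP [uA _] /andP [vA _].
exact: finj.
Qed.

Lemma strict_unique A f g : strict_on A f -> strict_on A g -> f @: A = g @: A ->
  forall x, x \in A -> f x = g x.
Proof.
move=> hf hg hfg x xA.
have e := strict_cnt hf xA; rewrite -(strict_cnt hg xA) hfg in e.
have fV : f x \in g @: A by rewrite -hfg imset_f.
have gV : g x \in g @: A by rewrite imset_f.
set V := g @: A in e fV gV.
apply/ord_inj; case: (ltngtP (f x) (g x)) => // h; exfalso.
- have : [set z in V | (z < f x)%N] \proper [set z in V | (z < g x)%N].
    apply/properP; split.
      by apply/fintype.subsetP => z; rewrite !inE => /andP [-> /= hz]; lia.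
    by exists (f x); rewrite !inE ?fV ?ltnn //=.
  by move/proper_card; rewrite e ltnn.
- have : [set z in V | (z < g x)%N] \proper [set z in V | (z < f x)%N].
    apply/properP; split.
      by apply/fintype.subsetP => z; rewrite !inE => /andP [-> /= hz]; lia.
    by exists (g x); rewrite !inE ?gV ?ltnn //=.
  by move/proper_card; rewrite e ltnn.
Qed.

Definition lrmax s (i : 'I_n) := [forall j : 'I_n, (j < i)%N ==> (s j < s i)%N].
Definition Pof s := [set i | lrmax s i].

Lemma strict_P s : strict_on (Pof s) s.
Proof.
move=> x y _; rewrite inE => /forallP hy hxy.
by have := hy x; rewrite hxy.
Qed.

Lemma strict_nP s : ~~ contains321 s -> strict_on (~: Pof s) s.
Proof.
move=> hs x y; rewrite !inE => hx hy hxy.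
move: hx; rewrite /lrmax negb_forall => /existsP [j]; rewrite negb_imply => /andP [hjx hj].
case: (ltngtP (s x) (s y)) => // h.
  exfalso; apply: (negP hs); apply/existsP; exists j; apply/existsP; exists x.
  apply/existsP; exists y; apply/and4P; split => //.
  have hne : (s x : nat) <> s j by move/ord_inj/perm_inj => e; move: hjx; rewrite e ltnn.
  lia.
by move: (ord_inj h) => /perm_inj e; move: hxy; rewrite e ltnn.
Qed.

Lemma avoid_inj s r : ~~ contains321 s -> ~~ contains321 r -> Pof s = Pof r ->
  s @: Pof s = r @: Pof r -> s = r.
Proof.
move=> hs hr hP hV; apply/permP => x.
case: (boolP (x \in Pof s)) => hx.
  have h2 : strict_on (Pof s) r by rewrite hP; exact: strict_P.
  have h3 : s @: Pof s = r @: Pof s by rewrite hV hP.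
  exact: (strict_unique (@strict_P s) h2 h3 hx).
have hx' : x \in ~: Pof s by rewrite inE.
have h2 : strict_on (~: Pof s) r by rewrite hP; exact: strict_nP.
have h3 : s @: (~: Pof s) = r @: (~: Pof s).
  by rewrite -!preim_permV !preimsetC !preim_permV hV hP.
exact: (strict_unique (strict_nP hs) h2 h3 hx').
Qed.

Lemma avoid_card : #|[set s : 'S_n | ~~ contains321 s]| <= 4 ^ n.
Proof.
set A := [set s | _].
have inj : {in A &, injective (fun s : 'S_n => (Pof s, s @: Pof s))}.
  move=> s r; rewrite !inE => hs hr [e1 e2]; exact: avoid_inj.
rewrite -(card_in_imset inj).
apply: (@leq_trans #|finset.setX (powerset [set: 'I_n]) (powerset [set: 'I_n])|).
  apply: subset_leq_card; apply/fintype.subsetP => -[p1 p2] _; rewrite finset.in_setX !powersetE !finset.subsetT.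
  by [].
by rewrite cardsX card_powerset cardsT card_ord -expnMn.
Qed.
End Bound.
Lemma c_le n : c_n n <= 4 ^ n.
Proof.
apply: leq_trans (avoid_card n); apply: subset_leq_card; apply/fintype.subsetP => s.
by rewrite !inE => /andP [].
Qed.

Lemma c_super a b : c_n a.+1 * c_n b.+1 <= c_n (a.+1 + b.+1).
Proof.
rewrite /c_n -cardsX.
have inj : injective (fun p : 'S_a.+1 * 'S_b.+1 => mperm p.1 p.2).
  by move=> [s t] [s' t'] /= /mperm_inj [-> ->].
rewrite -(card_imset _ inj); apply: subset_leq_card.
apply/fintype.subsetP => _ /imsetP [[s t] /setXP [hs ht] ->].
rewrite !inE in hs ht *; case/andP: hs => cs as_; case/andP: ht => ct at_.
by rewrite mperm_cyclic // mperm_avoid.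
Qed.

Lemma c_one : 0 < c_n 1.
Proof.
apply/card_gt0P; exists 1%g; rewrite inE; apply/andP; split.
  apply: (@all_cyclic _ _ ord0) => y; rewrite (ord1 y); exact: porbit_id.
apply/negP => /existsP [i /existsP [j /existsP [k /and4P [hij _ _ _]]]].
by move: hij; rewrite (ord1 i) (ord1 j).
Qed.

Lemma c_pos n : 0 < n -> 0 < c_n n.
Proof.
case: n => // n _; elim: n => [|n IH]; first exact: c_one.
have := c_super n 0; rewrite addn1 => h; apply: leq_trans h.
by rewrite muln_gt0 IH c_one.
Qed.

Lemma c_pow m n : 0 < m -> 0 < n -> c_n m ^ (n %/ m) <= c_n n.
Proof.
move=> hm; elim/ltn_ind: n => n IH hn.
case: (ltnP n m) => hnm.
  by rewrite divn_small // expn0 c_pos.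
case: (eqVneq n m) => [->|nm].
  by rewrite divnn hm expn1.
have hk : 0 < n - m by lia.
have -> : n = m + (n - m) by lia.
rewrite divnDl ?dvdnn // divnn hm expnS.
have IH' := IH (n - m) ltac:(lia) hk.
move: IH' hk; move: (n - m) => k; case: m hm {IH hnm nm} => // a _.
case: k => // b IH' _.
apply: leq_trans (c_super a b); exact: leq_mul.
Qed.

Unset Implicit Arguments.
Local Open Scope classical_set_scope.
Local Open Scope ring_scope.

Section A.
Variable R : realType.
Definition uu (n : nat) : R := (c_n n)%:R `^ (n%:R)^-1.
Definition LL (n : nat) : R := ln (c_n n)%:R.

Lemma cR_ge1 n : (0 < n)%N -> 1 <= (c_n n)%:R :> R.
Proof. by move=> hn; rewrite ler1n c_pos. Qed.

Lemma cR_gt0 n : (0 < n)%N -> 0 < (c_n n)%:R :> R.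
Proof. by move=> hn; rewrite ltr0n c_pos. Qed.

Lemma u_exp n : (0 < n)%N -> uu n = expR ((n%:R)^-1 * LL n).
Proof.
move=> hn; rewrite /uu /powR.
have : (c_n n)%:R != 0 :> R by rewrite pnatr_eq0 -lt0n c_pos.
by move=> /negPf ->.
Qed.

Lemma L_ge0 n : (0 < n)%N -> 0 <= LL n.
Proof. by move=> hn; apply: ln_ge0; apply: cR_ge1. Qed.

Lemma L_le n : (0 < n)%N -> LL n <= n%:R * ln 4.
Proof.
move=> hn; rewrite /LL mulr_natl -lnXn //.
rewrite ler_ln ?posrE ?exprn_gt0 ?cR_gt0 //.
by rewrite -natrX ler_nat c_le.
Qed.

Lemma L_pow m n : (0 < m)%N -> (0 < n)%N -> (n %/ m)%:R * LL m <= LL n.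
Proof.
move=> hm hn; rewrite /LL mulr_natl -lnXn ?cR_gt0 //.
rewrite ler_ln ?posrE ?exprn_gt0 ?cR_gt0 //.
by rewrite -natrX ler_nat c_pow.
Qed.

Lemma u_le4 n : uu n <= 4.
Proof.
case: n => [|n]; first by rewrite /uu invr0 powRr0; lra.
rewrite u_exp // -[4 in X in _ <= X]lnK ?posrE; last lra.
rewrite ler_expR ler_pdivrMl ?ltr0n //; exact: L_le.
Qed.

Lemma u_ge0 n : 0 <= uu n.
Proof. exact: powR_ge0. Qed.

Lemma u0 : uu 0 <= uu 1.
Proof.
rewrite /uu invr0 powRr0 invr1 powRr1 ?ler0n //; exact: cR_ge1.
Qed.

Lemma u_lower m n : (0 < m)%N -> (0 < n)%N ->
  uu m * (1 - m%:R * ((m%:R)^-1 * LL m) / n%:R) <= uu n.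
Proof.
move=> hm hn.
set l := (m%:R)^-1 * LL m.
have hl : 0 <= l by rewrite mulr_ge0 ?invr_ge0 ?ler0n ?L_ge0.
have Lm : LL m = m%:R * l by rewrite /l mulrA mulfV ?mul1r // pnatr_eq0 -lt0n.
have um : uu m = expR l by rewrite u_exp.
clearbody l.
have hq : n%:R - m%:R <= (n %/ m)%:R * m%:R :> R.
  have := divn_eq n m; have := ltn_pmod n hm => h1 h2.
  have : (n <= n %/ m * m + m)%N by lia.
  rewrite -(ler_nat R) natrD natrM; lra.
have hLn : (n%:R - m%:R) * l <= LL n.
  have h1 : (n%:R - m%:R) * l <= (n %/ m)%:R * LL m.
    by rewrite Lm mulrA; apply: ler_wpM2r.
  exact: le_trans h1 (L_pow _ _ hm hn).
have hn' : 0 < n%:R :> R by rewrite ltr0n.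
have key : l - m%:R * l / n%:R <= (n%:R)^-1 * LL n.
  have -> : l - m%:R * l / n%:R = (n%:R - m%:R) * l / n%:R.
    by field; rewrite pnatr_eq0 -lt0n.
  by rewrite [_^-1 * LL n]mulrC ler_pM2r ?invr_gt0.
rewrite um u_exp //.
apply: le_trans (_ : expR (l - m%:R * l / n%:R) <= _); last by rewrite ler_expR.
rewrite expRD; apply: ler_wpM2l; first exact: expR_ge0.
have := expR_ge1Dx (- (m%:R * l / n%:R)); lra.
Qed.

Lemma u_cvg : exists s : R, uu @ \oo --> s.
Proof.
set E := range uu.
have hE : has_sup E.
  split; first by exists (uu 0), 0%N.
  exists 4 => _ [n _ <-]; exact: u_le4.
exists (sup E).
apply/cvgrPdist_le => e he.
have [_ [m0 _ <-] hm0] := sup_adherent he hE.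
pose m := if m0 == 0%N then 1%N else m0.
have hm : (0 < m)%N by rewrite /m; case: ifP => // /negbT; rewrite lt0n.
have hum : sup E - e < uu m.
  rewrite /m; case: eqP hm0 => [-> h|] //; exact: lt_le_trans h u0.
set l := (m%:R)^-1 * LL m.
set d := uu m - (sup E - e).
have hd : 0 < d by rewrite /d; lra.
set K := uu m * m%:R * l.
exists (Num.truncn (K / d)).+1 => // n /= hn.
have hn0 : (0 < n)%N by apply: leq_trans hn.
have hnd : K / d < n%:R.
  apply: lt_le_trans (truncnS_gt _) _; by rewrite ler_nat.
have hK : K / n%:R <= d.
  rewrite ler_pdivrMr ?ltr0n //; rewrite ltr_pdivrMr // in hnd; lra.
have h1 := u_lower _ _ hm hn0.
have e1 : uu m * (1 - m%:R * ((m%:R)^-1 * LL m) / n%:R) = uu m - K / n%:R.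
  by rewrite /K /l; field; rewrite !pnatr_eq0 -!lt0n hm hn0.
have hub : uu n <= sup E by apply: sup_upper_bound hE _ (ex_intro2 _ _ n I erefl).
have dE : d = uu m - (sup E - e) by []. clearbody d K l.
rewrite ler_norml; apply/andP; split; lra.
Qed.
End A.


Theorem mainTheorem9 (R : realType) :
  let u : nat -> R := fun n => (c_n n)%:R `^ (n%:R)^-1 in
  cvgn u /\ ((limn u)%:E = limn_esup (fun n => (u n)%:E))%E.
Proof.
move=> u.
have [s us] := u_cvg R.
have us' : u @ \oo --> s := us.
have cu : cvgn u by apply/cvg_ex; exists s.
split => //.
have cE : cvgn (fun n => (u n)%:E).
  apply/cvg_ex; exists s%:E; apply: (cvg_comp _ _ us') => //.
rewrite is_cvg_limn_esupE //.
by rewrite -EFin_lim.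
Qed.
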